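(* There is an absolute constant $c>0$ such that the following holds. Let $A\subset\mathbb{R}$ be a finite convex set and $A'\subseteq A$ nonempty. Then \[ |A'+A-A|\ge c\,|A'|\,|A|. \] Moreover, $|A-A|\,|A+A|\ge c\,|A|^3$.
   Context: A finite set $A=\{a_1<a_2<\dots<a_k\}\subset\mathbb{R}$ is convex if $a_i-a_{i-1}<a_{i+1}-a_i$ for all $1<i<k$. For finite sets, $X+Y-Z=\{x+y-z:x\in X,y\in Y,z\in Z\}$, $A+A=\{a+b:a,b\in A\}$, $A-A=\{a-b:a,b\in A\}$. *)

(* Defs.v *)
(* Finite subsets of an ordered field are represented by
   duplicate-free sequences; cardinality = size. *)
From HB Require Import structures.
From mathcomp Require Import all_boot all_order all_algebra.
Set Implicit Arguments. Unset Strict Implicit. Unset Printing Implicit Defensive.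
Import Order.TTheory GRing.Theory Num.Theory.
Local Open Scope ring_scope.

Definition convex_set (R : realFieldType) (A : seq R) : Prop :=
  let s := sort <=%R A in
  forall i : nat, (0 < i)%N -> (i.+1 < size s)%N ->
    s`_i - s`_i.-1 < s`_i.+1 - s`_i.

Definition sumdiff (R : realFieldType) (X Y Z : seq R) : seq R :=
  undup [seq w - z | w <- [seq x + y | x <- X, y <- Y], z <- Z].

Definition sumset (R : realFieldType) (X Y : seq R) : seq R :=
  undup [seq x + y | x <- X, y <- Y].

Definition diffset (R : realFieldType) (X Y : seq R) : seq R :=
  undup [seq x - y | x <- X, y <- Y].

(* Main.v *)
Require Import Defs.
From HB Require Import structures.
From mathcomp Require Import all_boot all_order all_algebra.
From mathcomp Require Import finmap zify ring lra.
From Stdlib Require Import Classical.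
Set Implicit Arguments. Unset Strict Implicit. Unset Printing Implicit Defensive.
Import Order.TTheory GRing.Theory Num.Theory.
Local Open Scope ring_scope.
Section Pet.
Local Open Scope fset_scope.
Variable V : zmodType.

Definition ss (X B : {fset V}) : {fset V} := [fset z in [seq (x + b)%R | x <- enum_fset X, b <- enum_fset B]].
Definition tr (c : V) (X : {fset V}) : {fset V} := [fset z in [seq (x + c)%R | x <- enum_fset X]].

Lemma ssP z X B : reflect (exists x b, [/\ x \in X, b \in B & z = (x + b)%R]) (z \in ss X B).
Proof.
rewrite /ss inE; apply: (iffP allpairsP).
  by move=> [[x b] /= [hx hb ->]]; exists x, b.
by move=> [x [b [hx hb ->]]]; exists (x, b).
Qed.

Lemma trP z c X : reflect (exists2 x, x \in X & z = (x + c)%R) (z \in tr c X).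
Proof. rewrite /tr inE; exact: mapP. Qed.

Lemma card_tr c X : #|` tr c X| = #|` X|.
Proof.
rewrite /tr card_fseq undup_id ?size_map // map_inj_uniq ?fset_uniq //.
by move=> x y /addIr.
Qed.

Lemma mem_ss x b X B : x \in X -> b \in B -> (x + b)%R \in ss X B.
Proof. by move=> hx hb; apply/ssP; exists x, b. Qed.

Definition minimal (B X : {fset V}) :=
  forall Z, Z `<=` X -> (#|` ss X B| * #|` Z| <= #|` ss Z B| * #|` X|)%N.

Lemma exists_min (B : {fset V}) (n : nat) : forall Y : {fset V}, (#|` Y| <= n)%N -> Y != fset0 ->
  exists X, [/\ X `<=` Y, X != fset0, minimal B X &
     (#|` ss X B| * #|` Y| <= #|` ss Y B| * #|` X|)%N].
Proof.
elim: n => [|n IH] Y hY hne.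
  by move: hY; rewrite leqn0 cardfs_eq0 (negbTE hne).
case: (classic (exists Z, [/\ Z `<=` Y, Z != fset0 & (#|` ss Y B| * #|` Z| > #|` ss Z B| * #|` Y|)%N])).
  move=> [Z [hZY hZ0 hlt]].
  have hZlt : (#|` Z| < #|` Y|)%N.
    apply: fproper_ltn_card; rewrite fproperEneq hZY andbT.
    by apply/eqP => E; move: hlt; rewrite E ltnn.
  have hZn : (#|` Z| <= n)%N by rewrite -ltnS (leq_trans hZlt hY).
  have [X [hXZ hX0 hXm hXr]] := IH Z hZn hZ0.
  exists X; split => //; first exact: fsubset_trans hXZ hZY.
  have hZp : (0 < #|` Z|)%N by rewrite cardfs_gt0.
  rewrite -(leq_pmul2r hZp).
  have h1 : (#|` ss X B| * #|` Y| * #|` Z| <= #|` ss Z B| * #|` X| * #|` Y|)%N.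
    by rewrite mulnAC leq_mul2r hXr orbT.
  apply: (leq_trans h1).
  have h2 : (#|` ss Z B| * #|` Y| <= #|` ss Y B| * #|` Z|)%N := ltnW hlt.
  by rewrite mulnAC [X in (_ <= X)%N]mulnAC leq_mul2r h2 orbT.
move=> hno; exists Y; split => //.
move=> Z hZ; case: (boolP (Z == fset0)) => [/eqP ->|hZ0].
  by rewrite cardfs0 muln0.
rewrite leqNgt; apply/negP => hlt; apply: hno; exists Z; split => //.
Qed.

Lemma in_fset_cons (z c : V) (s : seq V) : (z \in [fset x in c :: s]) = (z == c) || (z \in [fset x in s]).
Proof. by rewrite !inE. Qed.

Lemma petridis (B X : {fset V}) (s : seq V) : minimal B X -> forall C : {fset V},
  (forall z, (z \in C) = (z \in s)) ->
  (#|` ss (ss X B) C| * #|` X| <= #|` ss X B| * #|` ss X C|)%N.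
Proof.
move=> hmin; elim: s => [|c s IHs] C0 hC0.
  have -> : ss (ss X B) C0 = fset0.
    by apply/fsetP => z; rewrite inE; apply/negP => /ssP [x [b [_]]]; rewrite hC0.
  by rewrite cardfs0.
have IH := IHs [fset x in s] (fun z => ltac:(by rewrite inE)).
have in_fset_cons' z : (z \in C0) = (z == c) || (z \in [fset x in s]).
  by rewrite hC0 !inE.
set C := [fset x in s] in IH *.
set P := ss (ss X B) C in IH *.
set Q := ss X B in IH *.
set P' := ss Q C0.
have eP : P' = P `|` tr c Q.
  apply/fsetP => z; apply/ssP/fsetUP.
    move=> [q [b [hq hb ->]]]; move: hb; rewrite in_fset_cons' => /orP [/eqP ->|hb].
      by right; apply/trP; exists q.
    by left; apply/ssP; exists q, b.
  case=> [/ssP [q [b [hq hb ->]]]|/trP [q hq ->]].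
    by exists q, b; split => //; rewrite in_fset_cons' hb orbT.
  by exists q, c; split => //; rewrite in_fset_cons' eqxx.
pose Y := [fset x in X | all (fun b => ((x + b) + c)%R \in P) (enum_fset B)].
have hYX : Y `<=` X by apply/fsubsetP => y; rewrite !inE => /andP [].
have hYm := hmin Y hYX.
have ha : tr c (ss Y B) `<=` P `&` tr c Q.
  apply/fsubsetP => z hz.
  case/trP: hz => w hw ->; case/ssP: hw => y [b [hy hb ->]].
  have /andP [hyX /allP hall] : (y \in X) && all (fun b0 => ((y + b0) + c)%R \in P) (enum_fset B).
    by move: hy; rewrite /Y inE.
  rewrite in_fsetI; apply/andP; split; first exact: (hall b hb).
  by apply/trP; exists (y + b)%R => //; apply: mem_ss.
have hb1 := cardfsUI P (tr c Q).
have hb2 := fsubset_leq_card ha.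
rewrite !card_tr in hb1 hb2.
set XC := ss X C in IH *.
have eXC : ss X C0 = XC `|` tr c X.
  apply/fsetP => z; apply/ssP/fsetUP.
    move=> [x [b [hx hb ->]]]; move: hb; rewrite in_fset_cons' => /orP [/eqP ->|hb].
      by right; apply/trP; exists x.
    by left; apply/ssP; exists x, b.
  case=> [/ssP [x [b [hx hb ->]]]|/trP [x hx ->]].
    by exists x, b; split => //; rewrite in_fset_cons' hb orbT.
  by exists x, c; split => //; rewrite in_fset_cons' eqxx.
have hd : XC `&` tr c X `<=` tr c Y.
  apply/fsubsetP => z /fsetIP [/ssP [x' [c' [hx' hc' ->]]] /trP [x hx e]].
  apply/trP; exists x => //.
  rewrite /Y !inE /=; apply/andP; split; first exact: hx.
  apply/allP => b hb.
  have -> : (x + b + c = (x' + b) + c')%R by rewrite addrAC -e addrAC.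
  by apply: mem_ss => //; apply: mem_ss.
have hc1 := cardfsUI XC (tr c X).
have hc2 := fsubset_leq_card hd.
rewrite !card_tr in hc1 hc2.
rewrite eP eXC.
move: IH hYm hb1 hb2 hc1 hc2.
set p := #|` P|; set p' := #|` P `|` tr c Q|; set q := #|` Q|; set sy := #|` ss Y B|;
set x := #|` X|; set y := #|` Y|; set xc := #|` XC|; set xc' := #|` XC `|` tr c X|;
set i1 := #|` P `&` tr c Q|; set i2 := #|` XC `&` tr c X|.
move=> IH hYm hb1 hb2 hc1 hc2.
nia.
Qed.
Lemma petridisF (B X C : {fset V}) : minimal B X ->
  (#|` ss (ss X B) C| * #|` X| <= #|` ss X B| * #|` ss X C|)%N.
Proof.
move=> h; apply: (petridis (s := enum_fset C) h) => z; by [].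
Qed.
End Pet.

Section Part1.
Variable R : realFieldType.
Variable A : seq R.
Hypothesis uA : uniq A.
Hypothesis cA : convex_set A.

Let s := sort <=%R A.
Let k := size A.

Lemma size_s : size s = k.
Proof. by rewrite size_sort. Qed.

Lemma s_sorted : sorted <%R s.
Proof. by rewrite sort_lt_sorted. Qed.

Lemma s_lt i j : (i < j)%N -> (j < k)%N -> s`_i < s`_j.
Proof.
move=> hij hj; rewrite (lt_sorted_ltn_nth 0 s_sorted) // inE size_s //.
exact: ltn_trans hij hj.
Qed.

Lemma s_le i j : (i <= j)%N -> (j < k)%N -> s`_i <= s`_j.
Proof.
rewrite leq_eqVlt => /orP [/eqP -> //|hij] hj.
by rewrite ltW // s_lt.
Qed.

Let d i := s`_i.+1 - s`_i.

Lemma d_pos i : (i.+1 < k)%N -> 0 < d i.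
Proof. by move=> hi; rewrite /d subr_gt0 s_lt. Qed.

Lemma d_succ j : (j.+2 < k)%N -> d j < d j.+1.
Proof.
move=> hj; have := cA (i := j.+1) erefl; rewrite size_s => /(_ hj).
by rewrite /d.
Qed.

Lemma d_lt i j : (i < j)%N -> (j.+1 < k)%N -> d i < d j.
Proof.
elim: j => // j IH; rewrite ltnS leq_eqVlt => /orP [/eqP ->|hij] hj.
  exact: d_succ.
apply: lt_trans (IH hij (ltnW hj)) (d_succ hj).
Qed.

Lemma d_le i j : (i <= j)%N -> (j.+1 < k)%N -> d i <= d j.
Proof.
rewrite leq_eqVlt => /orP [/eqP -> //|hij] hj.
by rewrite ltW // d_lt.
Qed.

Lemma s_in i : (i < k)%N -> s`_i \in A.
Proof. by move=> hi; rewrite -(mem_sort <=%R) mem_nth // size_s. Qed.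


Lemma memT (A' : seq R) x y z : x \in A' -> y \in A -> z \in A -> x + y - z \in sumdiff A' A A.
Proof.
move=> hx hy hz; rewrite mem_undup; apply/allpairsP; exists (x + y, z); split => //.
by apply/allpairsP; exists (x, y).
Qed.

Lemma part1 (A' : seq R) : uniq A' -> A' != [::] -> {subset A' <= A} ->
  (size A' * k <= 4 * size (sumdiff A' A A))%N.
Proof.
move=> uA' nA' sA'.
set T := sumdiff A' A A.
have uT : uniq T by apply: undup_uniq.
have hA'T : (size A' <= size T)%N.
  apply: uniq_leq_size => // x hx.
  by have := memT hx (sA' x hx) (sA' x hx); rewrite addrK.
have k1 : (0 < k)%N.
  have [a ha] : exists a, a \in A' by case: (A') nA' => // a ? _; exists a; rewrite mem_head.
  have haA := sA' a ha.
  by rewrite /k lt0n size_eq0; apply/negP => /eqP E; move: haA; rewrite E.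
pose P := [seq index a s | a <- A'].
have sP : size P = size A' by rewrite size_map.
have hP p : p \in P -> (p < k)%N /\ s`_p \in A'.
  move=> /mapP [a ha ->]; have has : a \in s by rewrite mem_sort sA'.
  by split; [rewrite -size_s index_mem | rewrite nth_index].
have uP : uniq P.
  rewrite map_inj_in_uniq // => a b ha hb e.
  have has : a \in s by rewrite mem_sort sA'.
  have hbs : b \in s by rewrite mem_sort sA'.
  by rewrite -(nth_index 0 has) e nth_index.
pose L := [seq (p, i) | p <- P, i <- iota 0 k.-1].
have uL : uniq L.
  by apply: allpairs_uniq => //; [exact: iota_uniq | move=> [a b] [c e] _ _].
have memL x : x \in L -> [/\ x.1 \in P & (x.2 < k.-1)%N].
  by move=> /allpairsP [[p i] [hp hi ->]]; rewrite mem_iota in hi.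
pose dom1 := [seq x <- L | (x.2 <= x.1)%N].
pose dom2 := [seq x <- L | (x.1 <= x.2)%N].
have hsz : (size L <= size dom1 + size dom2)%N.
  rewrite !size_filter -count_predUI.
  rewrite (@eq_in_count _ (predU _ _) predT); last first.
    by move=> x _ /=; rewrite leq_total.
  by rewrite count_predT leq_addr.
have sL : size L = (size A' * k.-1)%N by rewrite size_allpairs size_iota sP.
pose F1 x := s`_(x.1) + d x.2.
pose F2 x := s`_(x.2.+1) - d x.1.
have h1 : (size dom1 <= size T)%N.
  rewrite -(size_map F1); apply: uniq_leq_size.
    rewrite map_inj_in_uniq; first exact: filter_uniq.
    move=> [p i] [p' i']; rewrite !mem_filter /= => /andP [hip hpi] /andP [hip' hpi'].
    have [/hP [hp _] hi] := memL _ hpi; have [/hP [hp' _] hi'] := memL _ hpi'.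
    rewrite /F1 /= => e.
    have key : forall p i p' i', (i <= p)%N -> (p < p')%N -> (p' < k)%N -> (i'.+1 < k)%N ->
        s`_p + d i < s`_p' + d i'.
      move=> a b a' b' hba haa' ha' hb'.
      apply: (le_lt_trans (y := s`_a')); last by rewrite ltrDl d_pos.
      apply: (le_trans (y := s`_a.+1)); last by apply: s_le.
      have : d b <= d a by apply: d_le => //; exact: leq_ltn_trans haa' ha'.
      by rewrite /d; lra.
    have hi1 : (i.+1 < k)%N by move: hi; case: (k) k1 => // n _; rewrite ltnS.
    have hi1' : (i'.+1 < k)%N by move: hi'; case: (k) k1 => // n _; rewrite ltnS.
    case: (ltngtP p p') => hpp.
    - by move: (key _ _ _ _ hip hpp hp' hi1'); rewrite e ltxx.
    - by move: (key _ _ _ _ hip' hpp hp hi1); rewrite e ltxx.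
    subst p'; move/addrI: e => e; congr pair.
    case: (ltngtP i i') => hii //.
    - by move: (d_lt hii hi1'); rewrite e ltxx.
    - by move: (d_lt hii hi1); rewrite e ltxx.
  move=> y /mapP [[p i] hx ->]; rewrite /F1 /d /=.
  move: hx; rewrite mem_filter /= => /andP [_ hx]; have [/hP [hp hpA] hi] := memL _ hx.
  have hi1 : (i.+1 < k)%N by move: hi; case: (k) k1 => // n _; rewrite ltnS.
  by rewrite addrA; apply: memT => //; apply: s_in => //; apply: ltnW.
have h2 : (size dom2 <= size T)%N.
  rewrite -(size_map F2); apply: uniq_leq_size.
    rewrite map_inj_in_uniq; first exact: filter_uniq.
    move=> [p i] [p' i']; rewrite !mem_filter /= => /andP [hip hpi] /andP [hip' hpi'].
    have [/hP [hp _] hi] := memL _ hpi; have [/hP [hp' _] hi'] := memL _ hpi'.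
    rewrite /F2 /= => e.
    have hi1 : (i.+1 < k)%N by move: hi; case: (k) k1 => // n _; rewrite ltnS.
    have hi1' : (i'.+1 < k)%N by move: hi'; case: (k) k1 => // n _; rewrite ltnS.
    have key : forall p i p' i', (p <= i)%N -> (p' <= i')%N -> (i < i')%N -> (i'.+1 < k)%N ->
        s`_i.+1 - d p < s`_i'.+1 - d p'.
      move=> a b a' b' hab ha'b' hbb' hb'.
      have hda : 0 < d a.
        by apply: d_pos; rewrite (leq_ltn_trans _ hb') // ltnS (leq_trans hab) // ltnW.
      apply: (lt_le_trans (y := s`_b.+1)); first by lra.
      apply: (le_trans (y := s`_b')); first by apply: s_le => //; apply: ltnW.
      have : d a' <= d b' by apply: d_le.
      by rewrite /d; lra.
    case: (ltngtP i i') => hii.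
    - by move: (key _ _ _ _ hip hip' hii hi1'); rewrite e ltxx.
    - by move: (key _ _ _ _ hip' hip hii hi1); rewrite e ltxx.
    subst i'; move: e => /addrI /oppr_inj e; congr pair.
    have hp1 : (p.+1 < k)%N by apply: leq_ltn_trans hi1; rewrite ltnS.
    have hp1' : (p'.+1 < k)%N by apply: leq_ltn_trans hi1; rewrite ltnS.
    case: (ltngtP p p') => hpp //.
    - by move: (d_lt hpp hp1'); rewrite e ltxx.
    - by move: (d_lt hpp hp1); rewrite e ltxx.
  move=> y /mapP [[p i] hx ->]; rewrite /F2 /d /=.
  move: hx; rewrite mem_filter /= => /andP [hpi hx]; have [/hP [hp hpA] hi] := memL _ hx.
  have hi1 : (i.+1 < k)%N by move: hi; case: (k) k1 => // n _; rewrite ltnS.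
  have hp1 : (p.+1 < k)%N by apply: leq_ltn_trans hi1; rewrite ltnS.
  have -> : s`_i.+1 - (s`_p.+1 - s`_p) = s`_p + s`_i.+1 - s`_p.+1 by ring.
  by apply: memT => //; apply: s_in.
rewrite sL in hsz.
have hk : (k.-1).+1 = k by rewrite prednK.
move: hk hsz h1 h2 hA'T; move: (k.-1) => km hk.
rewrite -hk; nia.
Qed.
End Part1.


Section Part2.
Variable R : realFieldType.

Lemma seq_fset_enum (B : {fset R}) : [fset x in enum_fset B]%fset = B.
Proof. by apply/fsetP => z; rewrite inE. Qed.

Lemma part2 (A : seq R) : uniq A -> convex_set A ->
  (size A ^ 3 <= 16 * (size (diffset A A) * size (sumset A A)))%N.
Proof.
move=> uA cA.
case: (posnP (size A)) => [->|k1]; first by rewrite exp0n.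
set k := size A in k1 *.
set sig := size (sumset A A). set del := size (diffset A A).
have [a0 ha0] : exists a, a \in A.
  by move: k1; rewrite /k; case: (A) => // a ? _; exists a; rewrite mem_head.
have sig1 : (0 < sig)%N.
  rewrite lt0n size_eq0; apply/negP => /eqP E.
  have : a0 + a0 \in sumset A A by rewrite mem_undup; apply/allpairsP; exists (a0, a0).
  by rewrite E.
have del1 : (0 < del)%N.
  rewrite lt0n size_eq0; apply/negP => /eqP E.
  have : a0 - a0 \in diffset A A by rewrite mem_undup; apply/allpairsP; exists (a0, a0).
  by rewrite E.
pose S := \sum_(a <- A) `|a|.
have hS a : a \in A -> `|a| <= S.
  by move=> ha; rewrite /S (big_rem a) //= lerDl sumr_ge0.
have hS' a : a \in A -> - S <= a <= S by move=> ha; rewrite -ler_norml hS.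
pose M := 6 * S + 1.
have S0 : 0 <= S by rewrite /S sumr_ge0.
have M0 : 0 < M by rewrite /M; lra.
pose m1 := del. pose m2 := sig.
pose sBp := [seq (j%:R * M + a) | j <- iota 0 m1, a <- A].
pose Bp : {fset R} := [fset z in sBp]%fset.
pose sBm := [seq (l%:R * (m1%:R * M) - a) | l <- iota 0 m2, a <- A].
pose Bm : {fset R} := [fset z in sBm]%fset.
pose B := (Bp `|` Bm)%fset.
pose FA : {fset R} := [fset z in A]%fset.
have cFA : #|` FA| = k by rewrite card_fseq undup_id.
have FA0 : FA != fset0 by rewrite -cardfs_gt0 cFA.
have [X [hXA hX0 hXm hXr]] := exists_min B (leqnn #|` FA|) FA0.
have hi := petridisF B hXm.
pose sU1 := [seq (j%:R * M + u) | j <- iota 0 m1, u <- sumset A A].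
pose U1 : {fset R} := [fset z in sU1]%fset.
pose sU2 := [seq (l%:R * (m1%:R * M) + v) | l <- iota 0 m2, v <- diffset A A].
pose U2 : {fset R} := [fset z in sU2]%fset.
have hU : (ss FA B `<=` U1 `|` U2)%fset.
  apply/fsubsetP => z /ssP [x [b [hx hb ->]]].
  have hxA : x \in A by move: hx; rewrite inE.
  case/fsetUP: hb; rewrite !inE => /allpairsP [[j a] [hj ha ->]] /=.
    apply/orP; left; apply/allpairsP; exists (j, x + a); split => //=.
      by rewrite mem_undup; apply/allpairsP; exists (x, a).
    by ring.
  apply/orP; right; apply/allpairsP; exists (j, x - a); split => //=.
    by rewrite mem_undup; apply/allpairsP; exists (x, a).
  by ring.
have cU1 : (#|` U1| <= m1 * sig)%N.
  by rewrite card_fseq (leq_trans (size_undup _)) // size_allpairs size_iota.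
have cU2 : (#|` U2| <= m2 * del)%N.
  by rewrite card_fseq (leq_trans (size_undup _)) // size_allpairs size_iota.
have hiii : (#|` ss FA B| <= m1 * sig + m2 * del)%N.
  apply: leq_trans (fsubset_leq_card hU) _.
  apply: leq_trans (leq_add cU1 cU2); by rewrite -cardfsUI leq_addr.
pose W := sumdiff (enum_fset X) A A.
have hXA' x : x \in X -> x \in A.
  by move=> hx; have := fsubsetP hXA x hx; rewrite inE.
have hW w : w \in W -> - (3 * S) <= w <= 3 * S.
  rewrite mem_undup => /allpairsP [[u b] [hu hb ->]] /=.
  move: hu => /= /allpairsP [[x a] [hx ha ->]] /=.
  rewrite /= in hx ha hb.
  move: (hS' _ (hXA' _ hx)) (hS' _ ha) (hS' _ hb) => /andP [? ?] /andP [? ?] /andP [? ?].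
  apply/andP; split; lra.
pose sY4 := [seq (n%:R * M + w) | n <- iota 0 (m1 * m2), w <- W].
pose Y4 : {fset R} := [fset z in sY4]%fset.
have cY4 : #|` Y4| = (m1 * m2 * size W)%N.
  rewrite card_fseq undup_id ?size_allpairs ?size_iota //.
  apply: allpairs_uniq => //; [exact: iota_uniq | exact: undup_uniq |].
  move=> [n1 w1] [n2 w2] /allpairsP [[n1' w1'] [hn1 hw1 [-> ->]]].
  move=> /allpairsP [[n2' w2'] [hn2 hw2 [-> ->]]] /= e.
  rewrite /= in hw1 hw2; have hMd : M = 6 * S + 1 by [].
  move: (hW _ hw1) (hW _ hw2) => /andP [? ?] /andP [? ?].
  case: (ltngtP n1' n2') => hn.
  - have : (n1'.+1)%:R * M <= n2'%:R * M by apply: ler_wpM2r; [exact: ltW | rewrite ler_nat].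
    rewrite -natr1 mulrDl mul1r => h; exfalso; clearbody M; lra.
  - have : (n2'.+1)%:R * M <= n1'%:R * M by apply: ler_wpM2r; [exact: ltW | rewrite ler_nat].
    rewrite -natr1 mulrDl mul1r => h; exfalso; clearbody M; lra.
  by subst n2'; move/addrI: e => ->.
have hY4 : (Y4 `<=` ss (ss X B) B)%fset.
  apply/fsubsetP => z hz; have : z \in sY4 by move: hz; rewrite inE.
  case/allpairsP => [[n w] [hn hw ->]]; rewrite /= in hn hw *.
  move: hw; rewrite mem_undup; case/allpairsP => [[u b] [hu hb ->]]; rewrite /= in hu hb *.
  move: hu; case/allpairsP => [[x a] [hx ha ->]]; rewrite /= in hx ha *.
  rewrite mem_iota /= in hn.
  pose j := (n %% m1)%N. pose l := (n %/ m1)%N.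
  have en : n%:R = j%:R + l%:R * m1%:R :> R by rewrite -natrM -natrD addnC -divn_eq.
  have -> : n%:R * M + (x + a - b) = (x + (j%:R * M + a)) + (l%:R * (m1%:R * M) - b).
    by rewrite en; ring.
  apply/ssP; exists (x + (j%:R * M + a)), (l%:R * (m1%:R * M) - b); split => //.
    apply: mem_ss => //; rewrite in_fsetU; apply/orP; left; rewrite inE.
    apply/allpairsP; exists (j, a); split => //.
    by rewrite mem_iota /= ltn_pmod.
  rewrite in_fsetU; apply/orP; right; rewrite inE.
  apply/allpairsP; exists (l, b); split => //.
  by rewrite mem_iota /= ltn_divLR // mulnC.
have hiv := fsubset_leq_card hY4.
have hXn : enum_fset X != [::].
  by move: hX0; apply: contra => /eqP E; apply/eqP/fsetP => z; rewrite -[z \in X]/(z \in enum_fset X) E.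
have hv := part1 uA cA (fset_uniq X) hXn hXA'.
rewrite cY4 in hiv; rewrite cFA in hXr.
have x1 : (0 < #|` X|)%N by rewrite cardfs_gt0.
move: hi hXr hiii hiv hv x1.
rewrite /m1 /m2.
set x := #|` X|; set q := #|` ss X B|; set p := #|` ss (ss X B) B|; set a := #|` ss FA B|.
set w := size W.
move=> hi hXr hiii hiv hv x1.
have D1 : (0 < del * sig)%N by rewrite muln_gt0 del1 sig1.
have h1 : (del * sig * w * x <= q * q)%N by nia.
have h2 : (q * k <= 2 * (del * sig) * x)%N by nia.
have h3 : (q * k * (q * k) <= 2 * (del * sig) * x * (2 * (del * sig) * x))%N by apply: leq_mul.
have h4 : (del * sig * w * x * (k * k) <= 4 * (del * sig) * (del * sig) * x * x)%N by nia.
have h5 : (w * (k * k) <= 4 * (del * sig) * x)%N.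
  have Dx : (0 < del * sig * x)%N by rewrite muln_gt0 D1 x1.
  rewrite -(leq_pmul2l Dx); nia.
have h6 : (x * k ^ 3 <= x * (16 * (del * sig)))%N by nia.
rewrite -(leq_pmul2l x1); nia.
Qed.
End Part2.

Theorem proposition1 :
  exists c : rat, 0 < c /\
    forall (R : realFieldType) (A : seq R), uniq A -> convex_set A ->
      (forall A' : seq R, uniq A' -> A' != [::] -> {subset A' <= A} ->
         c * (size A')%:R * (size A)%:R <= (size (sumdiff A' A A))%:R)
      /\
      c * (size A)%:R ^+ 3 <= (size (diffset A A))%:R * (size (sumset A A))%:R.
Proof.
exists (1 / 16); split; first by [].
move=> R A uA cA; split.
  move=> A' uA' nA' sA'.
  have h := part1 uA cA uA' nA' sA'.
  have h' : ((size A')%:R * (size A)%:R <= 4 * (size (sumdiff A' A A))%:R :> rat).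
    by rewrite -natrM -[4]/(4%:R) -natrM ler_nat.
  have t0 : 0 <= (size (sumdiff A' A A))%:R :> rat by [].
  lra.
have h := part2 uA cA.
have h' : ((size A)%:R ^+ 3 <= 16 * ((size (diffset A A))%:R * (size (sumset A A))%:R) :> rat).
  by rewrite -natrX -natrM -[16]/(16%:R) -natrM ler_nat.
lra.
Qed.
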